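(* Let $n\in\mathbb{N}$ and let $q$ be a natural number with $q\ge n(n-1)/2$. Then the complete graph $K_n$ can be embedded in any projective plane of order $q$.
   Context: A finite projective plane of order $q$ has $q^2+q+1$ points and lines, $q+1$ points on each line and $q+1$ lines through each point; any two distinct points lie on a unique line and any two lines meet in a unique point. An embedding of a simple graph $G=(V,E)$ into a projective plane is an injective map $\phi$ from $V$ to the points such that the induced map sending an edge $ab$ to the line through $\phi(a),\phi(b)$ is injective on $E$. *)

(* Defs.v *)
From mathcomp Require Import all_boot.
Set Implicit Arguments. Unset Strict Implicit. Unset Printing Implicit Defensive.

Definition projective_plane (q : nat) (P L : finType) (I : P -> L -> bool) : Prop :=
  [/\ #|P| = q ^ 2 + q + 1 /\ #|L| = q ^ 2 + q + 1,
      (forall l : L, #|[set x | I x l]| = q.+1),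
      (forall x : P, #|[set l | I x l]| = q.+1),
      (forall x y : P, x != y -> exists! l : L, I x l && I y l)
    & (forall l m : L, l != m -> exists! x : P, I x l && I x m)].

Definition line_through (P L : finType) (I : P -> L -> bool) (x y : P) : option L :=
  [pick l | I x l && I y l].

Definition simple_graph (V : finType) (e : rel V) : Prop :=
  symmetric e /\ irreflexive e.

(* Embedding of the graph (V,e) into the plane (P,L,I): an injective vertex map
   phi such that the induced map edge {a,b} |-> line through phi a, phi b
   is injective on the edge set. *)
Definition embedding (V : finType) (e : rel V) (P L : finType)
    (I : P -> L -> bool) (phi : V -> P) : Prop :=
  injective phi /\
  (forall a b c d : V, e a b -> e c d ->
     line_through I (phi a) (phi b) = line_through I (phi c) (phi d) ->
     (a = c /\ b = d) \/ (a = d /\ b = c)).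

Definition complete_rel (n : nat) : rel 'I_n := fun i j => i != j.

(* Main.v *)
Require Import Defs.
From mathcomp Require Import all_boot.
From mathcomp Require Import zify.

Section S.
Variables (q : nat) (P L : finType) (I : P -> L -> bool).

Definition nocol (s : seq P) := forall x y z l, x \in s -> y \in s -> z \in s ->
  x != y -> y != z -> x != z -> I x l -> I y l -> I z l -> False.

Definition inv (s : seq P) (C : {set P}) :=
  {subset s <= C} /\
  forall x y l z, x \in s -> y \in s -> x != y -> I x l -> I y l -> I z l -> z \in C.

Lemma card_bigcup_seq (s : seq P) (F : P -> {set P}) :
  #|\bigcup_(x <- s) F x| <= \sum_(x <- s) #|F x|.
Proof.
elim: s => [|a s IH]; first by rewrite !big_nil cards0.
rewrite !big_cons; apply: leq_trans (leq_card_setU _ _) _.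
by rewrite leq_add2l.
Qed.

Lemma mem_bigcup_seq (s : seq P) (F : P -> {set P}) a z :
  a \in s -> z \in F a -> z \in \bigcup_(x <- s) F x.
Proof.
elim: s => [|b s IH] //; rewrite in_cons big_cons => /predU1P [<- H|H1 H2].
  by rewrite inE H.
by rewrite inE IH ?orbT.
Qed.

Hypothesis HP : projective_plane q I.

Definition Fl (x p : P) : {set P} := [set z | [exists l, [&& I x l, I p l & I z l]]].

Lemma card_Fl x p : x != p -> #|Fl x p| <= q.+1.
Proof.
case: HP => _ H2 _ H4 _.
move=> /H4 [l0 [/andP[Hx Hp] U]].
rewrite -(H2 l0); apply: subset_leq_card; apply/subsetP => z.
rewrite !inE => /existsP [l /and3P[a b c]].
by rewrite (U l) ?a ?b.
Qed.

Lemma step (s : seq P) (C : {set P}) :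
  uniq s -> nocol s -> inv s C -> #|C| < #|P| ->
  exists p C', [/\ uniq (p :: s), nocol (p :: s), inv (p :: s) C' &
     #|C'| <= #|C| + 1 + size s * q.+1].
Proof.
move=> Us Ns [Sub Inv] Hc.
have [p pC] : exists p, p \notin C.
  apply/existsP; move: Hc; apply: contraLR; rewrite negb_exists => /forallP H.
  rewrite -leqNgt; apply: subset_leq_card; apply/subsetP => x _.
  by move: (H x); rewrite negbK.
have ps : p \notin s by apply: contra pC => /Sub.
have K : forall a b l, a \in s -> b \in s -> a != b -> I a l -> I b l -> I p l -> False.
  by move=> a b l ??????; move/negP: pC; apply; apply: (Inv a b l).
exists p, (C :|: [set p] :|: \bigcup_(x <- s) Fl x p); split.
- by rewrite /= ps.
- move=> x y z l; rewrite !in_cons.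
  case/predU1P => [->|xs]; case/predU1P => [->|ys]; case/predU1P => [->|zs];
  rewrite ?eqxx // => xy yz xz Ix Iy Iz.
  + by apply: (K y z l).
  + by apply: (K x z l) => //; rewrite eq_sym.
  + by apply: (K x y l).
  + by apply: (Ns x y z l).
- split.
  + move=> x; rewrite in_cons => /predU1P [->|xs]; first by rewrite !inE eqxx orbT.
    by rewrite !inE Sub.
  + move=> x y l z; rewrite !in_cons.
    have pF : forall a, a \in s -> I a l -> I p l -> I z l ->
        z \in C :|: [set p] :|: \bigcup_(x <- s) Fl x p.
      move=> a As Ia Ip Iz; apply/setUP; right.
      apply: (@mem_bigcup_seq s (fun x => Fl x p) a z As).
      by rewrite inE; apply/existsP; exists l; rewrite Ia Ip Iz.
    case/predU1P => [->|xs]; case/predU1P => [->|ys]; rewrite ?eqxx // => xy Ix Iy Iz.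
    * exact: (pF y).
    * exact: (pF x).
    * by rewrite !inE (Inv x y l z).
- apply: leq_trans (leq_card_setU _ _) _.
  rewrite leq_add //; first by apply: leq_trans (leq_card_setU _ _) _; rewrite cards1.
  apply: leq_trans (card_bigcup_seq _ _) _.
  rewrite -sum1_size big_distrl /= big_seq_cond [X in _ <= X]big_seq_cond.
  apply: leq_sum => x /andP[xs _]; rewrite mul1n card_Fl //.
  by apply: contra ps => /eqP <-.
Qed.

End S.

Theorem theorem2p15 (n q : nat) (P L : finType) (I : P -> L -> bool) :
  n * (n - 1) %/ 2 <= q ->
  projective_plane q I ->
  exists phi : 'I_n -> P, embedding (@complete_rel n) I phi.
Proof.
move=> Hn HP.
have HPc : #|P| = q ^ 2 + q + 1 by case: HP => [[]].
have Hn2 : n * (n - 1) <= 2 * q + 1.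
  have := divn_eq (n * (n - 1)) 2; have := ltn_pmod (n * (n - 1)) (isT : 0 < 2).
  lia.
have main : forall k, k <= n -> exists s C, [/\ size s = k, uniq s, @nocol P L I s,
    @inv P L I s C & 2 * #|C| <= 2 * k + q.+1 * (k * (k - 1))].
  elim => [|k IH] Hk.
    exists [::], set0; split => //; try (by move=> x y z l); try (by split => // x y l z).
    by rewrite cards0.
  have [s [C [Hs Us Ns Is Hc]]] := IH (ltnW Hk).
  have HC : #|C| < #|P|.
    rewrite HPc.
    have H1 : k * (k + 1) <= n * (n - 1) by nia.
    case: k Hk IH Hs Hc H1 => [|k] Hk _ Hs Hc H1; first by lia.
    nia.
  have [p [C' [U' N' I' H']]] := @step q P L I HP s C Us Ns Is HC.
  exists (p :: s), C'; split => //=; first by rewrite Hs.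
  rewrite Hs in H'. nia.
have [s [C [Hs Us Ns _ _]]] := main n (leqnn n).
have [x0 _] : exists x : P, true.
  have : 0 < #|P| by rewrite HPc addn1.
  by case/card_gt0P => x _; exists x.
have HL : forall x y : P, x != y ->
    exists l, line_through I x y = Some l /\ I x l /\ I y l.
  move=> x y xy; rewrite /line_through; case: pickP => [l /andP[a b]|H].
    by exists l.
  case: HP => _ _ _ H4 _; case: (H4 x y xy) => l [Hl _].
  by move: (H l); rewrite Hl.
exists (fun i => nth x0 s i); split.
  move=> i j /eqP; rewrite nth_uniq ?Hs // => /eqP ij; exact: val_inj.
have inj : forall i j : 'I_n, (nth x0 s i == nth x0 s j) = (i == j).
  move=> i j; rewrite nth_uniq ?Hs //.
have mem : forall i : 'I_n, nth x0 s i \in s by move=> i; rewrite mem_nth ?Hs.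
move=> a b c d; rewrite /complete_rel => ab cd.
have [l [Hl [Ia Ib]]] := HL (nth x0 s a) (nth x0 s b) ltac:(by rewrite inj).
have [l' [Hl' [Ic Id]]] := HL (nth x0 s c) (nth x0 s d) ltac:(by rewrite inj).
rewrite Hl Hl' => -[E]; subst l'.
have onl : forall e : 'I_n, nth x0 s e \in [set z | I z l] -> e = a \/ e = b.
  move=> e; rewrite inE => Ie.
  case: (eqVneq e a) => [->|ea]; first by left.
  case: (eqVneq e b) => [->|eb]; first by right.
  exfalso; apply: (Ns _ _ _ l (mem a) (mem b) (mem e)) => //; rewrite inj //.
  - by rewrite eq_sym.
  - by rewrite eq_sym.
have [Ec|Ec] := onl c ltac:(by rewrite inE); have [Ed|Ed] := onl d ltac:(by rewrite inE);
  subst c d; first [tauto | by rewrite eqxx in cd].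
Qed.
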